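(* Let $G$ be a finitely generated infinite group with finite generating set $S_G$ and let $H\ne\{1\}$ be a finite group; equip $H\wr G$ with the word metric with respect to $(H\setminus\{1\})\cup S_G$. Let $\gamma$ be the growth function of $G$ and $D^n_G$ an $n$-dimensional control function of $G$. Then for any $k\ge n$ there is a $k$-dimensional control function of $H\wr G$ which is weakly dominated by $t\mapsto (D^n_G(t)+t)\cdot\gamma(D^n_G(t)+t)$. Also, for any $k\ge n$, every $k$-dimensional control function of $H\wr G$ weakly dominates $\gamma$.
   Context: Wreath product: $H\wr G$ is the set of pairs $(f,g)$, $f:G\to H$ finitely supported, with $(f_1,g_1)(f_2,g_2)=(f_1\cdot(g_1f_2),g_1g_2)$ where $(gf)(\gamma)=f(g^{-1}\gamma)$; $g\in G$ is identified with $(1,g)$ and $a\in H$ with $(f_a,1)$. Growth function: $\gamma(r)=\#\{g\in G:|g|_{S_G}<r\}$. For a metric space $X$, $r>0$: $r$-components of $Y\subseteq X$ are classes of points joined by sequences in $Y$ with consecutive distances $<r$. An $m$-dimensional control function of $X$ is $D:\mathbb{R}_+\to\mathbb{R}_+\cup\{\infty\}$ such that for each $r>0$ there is a cover $\{X_0,\dots,X_m\}$ of $X$ such that every open ball $B(x,r)$ lies in some $X_i$ and every $r$-component of each $X_i$ has diameter at most $D(r)$. For functions $f,g$ on $\mathbb{R}_+$, $f$ weakly dominates $g$ if there are constants $\lambda\ge1$, $C\ge0$ with $g(t)\le\lambda f(\lambda t+C)+C$ for all $t\in\mathbb{R}_+$. *)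

(* Defs.v *)
From HB Require Import structures.
From mathcomp Require Import all_boot all_order all_algebra all_fingroup.
From mathcomp Require Import boolp classical_sets reals constructive_ereal ereal.
From Stdlib Require List.
From Stdlib Require Import Relations.
Set Implicit Arguments. Unset Strict Implicit. Unset Printing Implicit Defensive.
Import Order.TTheory GRing.Theory Num.Theory.
Local Open Scope ring_scope.
Local Open Scope ereal_scope.

Definition is_group (T : Type) (mul : T -> T -> T) (one : T) (inv : T -> T) : Prop :=
  (forall x y z, mul x (mul y z) = mul (mul x y) z) /\
  (forall x, mul one x = x) /\ (forall x, mul x one = x) /\
  (forall x, mul (inv x) x = one) /\ (forall x, mul x (inv x) = one).

Definition symm (T : Type) (inv : T -> T) (A : T -> Prop) : T -> Prop :=
  fun s => A s \/ A (inv s).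

(* word metric w.r.t. the generating predicate A (symmetrized):
   [wdist_le x y n] <-> d(x,y) = |x^{-1} y|_A <= n (as a natural number),
   i.e. some word of length <= n over A ∪ A^{-1} carries x to y. *)
Definition wdist_le (T : Type) (mul : T -> T -> T) (inv : T -> T) (A : T -> Prop)
  (x y : T) (n : nat) : Prop :=
  exists w : seq T, (size w <= n)%N /\ List.Forall (symm inv A) w /\ foldl mul x w = y.

Definition wdist_lt (R : realType) (T : Type) (mul : T -> T -> T) (inv : T -> T)
  (A : T -> Prop) (x y : T) (r : R) : Prop :=
  exists n : nat, wdist_le mul inv A x y n /\ (n%:R < r)%R.

(* d(x,y) <= D, with D in R ∪ {±oo} (d = min length; +oo if no word) *)
Definition wdist_leE (R : realType) (T : Type) (mul : T -> T -> T) (inv : T -> T)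
  (A : T -> Prop) (x y : T) (D : \bar R) : Prop :=
  D = +oo \/ exists n : nat, wdist_le mul inv A x y n /\ (n%:R)%:E <= D.

Definition generates (T : Type) (mul : T -> T -> T) (one : T) (inv : T -> T)
  (S : seq T) : Prop :=
  forall g, exists n, wdist_le mul inv (fun s => List.In s S) one g n.

Definition rcomp (R : realType) (T : Type) (A : T -> Prop)
  (dlt : T -> T -> R -> Prop) (r : R) (x y : T) : Prop :=
  A x /\ A y /\ clos_refl_trans T (fun a b => A a /\ A b /\ dlt a b r) x y.

(* m-dimensional control function of the metric space X (a subset of T),
   with distance given by [dlt] (d < r) and [dle] (d <= D). *)
Definition control_function (R : realType) (T : Type) (X : T -> Prop)
  (dlt : T -> T -> R -> Prop) (dle : T -> T -> \bar R -> Prop)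
  (m : nat) (D : R -> \bar R) : Prop :=
  (forall t : R, (0 <= t)%R -> (0 <= D t)%E) /\
  forall r : R, (0 < r)%R ->
    exists Xs : 'I_m.+1 -> T -> Prop,
      (forall i x, Xs i x -> X x) /\
      (forall x, X x -> exists i, Xs i x) /\
      (forall x, X x -> exists i, forall y, X y -> dlt x y r -> Xs i y) /\
      (forall i x y, rcomp (Xs i) dlt r x y -> dle x y (D r)).

Definition weakly_dominates (R : realType) (f g : R -> \bar R) : Prop :=
  exists lam C : R, (1 <= lam)%R /\ (0 <= C)%R /\
    forall t : R, (0 <= t)%R -> g t <= lam%:E * f (lam * t + C)%R + C%:E.

Definition is_growth_function (R : realType) (T : Type) (mul : T -> T -> T)
  (one : T) (inv : T -> T) (S : seq T) (gamma : R -> nat) : Prop :=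
  forall r : R, exists l : seq T, List.NoDup l /\ size l = gamma r /\
    forall g, List.In g l <-> wdist_lt mul inv (fun s => List.In s S) one g r.

(* extension of gamma to \bar R: gamma(+oo) = #G = +oo for infinite G *)
Definition growth_ext (R : realType) (gamma : R -> nat) (x : \bar R) : \bar R :=
  match x with
  | EFin r => ((gamma r)%:R)%:E
  | +oo => +oo
  | -oo => 0
  end.

Section Wreath.
Variables (G : Type) (mulG : G -> G -> G) (oneG : G) (invG : G -> G).
Variable H : finGroupType.

Definition wr := ((G -> H) * G)%type.

(* (f1,g1)(f2,g2) = (f1 . (g1 f2), g1 g2), (g f)(x) = f(g^{-1} x) *)
Definition wr_mul (p q : wr) : wr :=
  (fun x => (p.1 x * q.1 (mulG (invG p.2) x))%g, mulG p.2 q.2).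
Definition wr_one : wr := (fun _ => 1%g, oneG).
Definition wr_inv (p : wr) : wr := (fun x => ((p.1 (mulG p.2 x))^-1)%g, invG p.2).

(* finitely supported elements: the carrier of H wr G *)
Definition wr_elt (p : wr) : Prop :=
  exists l : seq G, forall x, p.1 x <> 1%g -> List.In x l.

(* generating set (H \ {1}) ∪ S_G, with a in H identified with (f_a, 1)
   (f_a(1) = a, f_a(x) = 1 otherwise) and g in G with (1, g) *)
Definition wr_gens (S : seq G) (p : wr) : Prop :=
  (exists a : H, a <> 1%g /\ p.2 = oneG /\ p.1 oneG = a /\
     forall x, x <> oneG -> p.1 x = 1%g)
  \/ (exists s, List.In s S /\ p = (fun _ => 1%g, s)).
End Wreath.

(* Main.v *)
Require Import Defs.
From HB Require Import structures.
From mathcomp Require Import all_boot all_order all_algebra all_fingroup.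
From mathcomp Require Import boolp classical_sets reals constructive_ereal ereal.
From mathcomp.algebra_tactics Require Import lra.
From Stdlib Require List.
From Stdlib Require Import Relations.
Import Order.TTheory GRing.Theory Num.Theory.
Set Implicit Arguments. Unset Strict Implicit. Unset Printing Implicit Defensive.


Lemma Forall_cat (T : Type) (P : T -> Prop) (u v : seq T) :
  List.Forall P u -> List.Forall P v -> List.Forall P (u ++ v).
Proof. elim: u => [|x u IH] //= Hu Hv; inversion Hu; constructor; auto. Qed.

Lemma Forall_map (T U : Type) (P : T -> Prop) (Q : U -> Prop) (f : T -> U) (w : seq T) :
  (forall x, P x -> Q (f x)) -> List.Forall P w -> List.Forall Q (map f w).
Proof. move=> HPQ; elim: w => [|x w IH] //= Hw; inversion Hw; constructor; auto. Qed.

Lemma Forall_rev (T : Type) (P : T -> Prop) (w : seq T) :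
  List.Forall P w -> List.Forall P (rev w).
Proof.
elim: w => [|x w IH] //= Hw; inversion Hw; subst.
rewrite rev_cons -cats1; apply: Forall_cat; auto.
Qed.

Lemma In_nth (T : Type) (x0 : T) (l : seq T) (j : nat) :
  (j < size l)%N -> List.In (nth x0 l j) l.
Proof.
elim: l j => [|x l IH] [|j] //= Hj; first by left.
by right; apply: IH.
Qed.

Lemma NoDup_nth_inj (T : Type) (x0 : T) (l : seq T) (i j : nat) :
  List.NoDup l -> (i < size l)%N -> (j < size l)%N -> nth x0 l i = nth x0 l j -> i = j.
Proof.
elim: l i j => [|x l IH] [|i] [|j] //= Hd Hi Hj; inversion Hd; subst.
- by move=> E; exfalso; apply: H1; rewrite E; apply: In_nth.
- by move=> E; exfalso; apply: H1; rewrite -E; apply: In_nth.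
- by move=> E; congr S; apply: IH.
Qed.

Section Grp.
Variables (G : Type) (mulG : G -> G -> G) (oneG : G) (invG : G -> G).
Hypothesis HG : is_group mulG oneG invG.

Lemma gA x y z : mulG x (mulG y z) = mulG (mulG x y) z.
Proof. by case: HG. Qed.
Lemma g1m x : mulG oneG x = x.
Proof. by case: HG => _ []. Qed.
Lemma gm1 x : mulG x oneG = x.
Proof. by case: HG => _ [] _ []. Qed.
Lemma gVm x : mulG (invG x) x = oneG.
Proof. by case: HG => _ [] _ [] _ []. Qed.
Lemma gmV x : mulG x (invG x) = oneG.
Proof. by case: HG => _ [] _ [] _ []. Qed.

Lemma gKm x y : mulG (invG x) (mulG x y) = y.
Proof. by rewrite gA gVm g1m. Qed.
Lemma gKVm x y : mulG x (mulG (invG x) y) = y.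
Proof. by rewrite gA gmV g1m. Qed.
Lemma ginv_uniq a b : mulG a b = oneG -> invG a = b.
Proof. by move=> E; rewrite -(gm1 (invG a)) -E gKm. Qed.
Lemma gVK x : invG (invG x) = x.
Proof. by apply: ginv_uniq; rewrite gVm. Qed.
Lemma gVM x y : invG (mulG x y) = mulG (invG y) (invG x).
Proof. by apply: ginv_uniq; rewrite -gA gKVm gmV. Qed.
Lemma gV1 : invG oneG = oneG.
Proof. by apply: ginv_uniq; rewrite g1m. Qed.
Lemma gV_eq1 x : invG x = oneG -> x = oneG.
Proof. by move=> E; rewrite -(gVK x) E gV1. Qed.
Lemma gcanc x y z : mulG x y = mulG x z -> y = z.
Proof. by move=> E; rewrite -(gKm x y) E gKm. Qed.

Lemma foldl_g x w : foldl mulG x w = mulG x (foldl mulG oneG w).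
Proof.
elim: w x => [|s w IH] x /=; first by rewrite gm1.
by rewrite IH [in RHS]IH g1m gA.
Qed.

Lemma foldl_revinv w : foldl mulG oneG (rev (map invG w)) = invG (foldl mulG oneG w).
Proof.
elim: w => [|s w IH] /=; first by rewrite gV1.
by rewrite rev_cons foldl_rcons IH [in RHS]foldl_g g1m gVM.
Qed.

Variable A : G -> Prop.
Notation symmG := (symm invG A).
Notation wd := (wdist_le mulG invG A).

Lemma symm_inv s : symmG s -> symmG (invG s).
Proof. by case=> h; [right; rewrite gVK | left]. Qed.

Lemma wd_trans a b c m m' : wd a b m -> wd b c m' -> wd a c (m + m').
Proof.
move=> [w [Hs [Hf Ha]]] [w' [Hs' [Hf' Hb]]]; exists (w ++ w'); split.
  by rewrite size_cat leq_add.
by split; [apply: Forall_cat | rewrite foldl_cat Ha].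
Qed.

Lemma wd_mono a b m m' : (m <= m')%N -> wd a b m -> wd a b m'.
Proof. by move=> le [w [Hs H]]; exists w; split => //; apply: leq_trans le. Qed.

Lemma wd_transl c a b m : wd a b m -> wd (mulG c a) (mulG c b) m.
Proof.
by move=> [w [Hs [Hf Ha]]]; exists w; do 2!split => //; rewrite foldl_g -gA -foldl_g Ha.
Qed.

Lemma wd_sym a b m : wd a b m -> wd b a m.
Proof.
move=> [w [Hs [Hf Ha]]]; exists (rev (map invG w)); split.
  by rewrite size_rev size_map.
split; first by apply: Forall_rev; apply: Forall_map Hf; apply: symm_inv.
by rewrite foldl_g foldl_revinv -Ha (foldl_g a) -gA gmV gm1.
Qed.
End Grp.


Section W.
Variables (G : Type) (mulG : G -> G -> G) (oneG : G) (invG : G -> G).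
Hypothesis HG : is_group mulG oneG invG.
Let gA := gA HG. Let g1m := g1m HG. Let gm1 := gm1 HG. Let gVm := gVm HG.
Let gmV := gmV HG. Let gKm := gKm HG. Let gKVm := gKVm HG. Let gVK := gVK HG.
Let gVM := gVM HG. Let gV1 := gV1 HG. Let gV_eq1 := gV_eq1 HG.
Let foldl_g := foldl_g HG. Let foldl_revinv := foldl_revinv HG.
Variable H : finGroupType.
Variable S : seq G.
Notation A := (fun s => List.In s S).
Notation symmG := (symm invG A).
Notation wd := (wdist_le mulG invG A).
Notation Wm := (wr_mul mulG invG (H := H)).
Notation Wi := (wr_inv mulG invG (H := H)).
Notation Wg := (wr_gens oneG (H := H) S).
Notation symmW := (symm Wi Wg).
Notation wdW := (wdist_le Wm Wi Wg).

Lemma pairE (T U : Type) (p : T * U) : p = (p.1, p.2).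
Proof. by case: p. Qed.

Lemma W_lift (f : G -> H) g s : Wm (f, g) (fun _ => 1%g, s) = (f, mulG g s).
Proof. by rewrite /wr_mul /=; congr pair; apply: funext => x; rewrite mulg1. Qed.

Lemma Wgen_G s : symmG s -> symmW (fun _ => 1%g, s).
Proof.
case=> h; [left; right; by exists s | right; right; exists (invG s); split => //].
by rewrite /wr_inv /=; congr pair; apply: funext => x; rewrite invg1.
Qed.

Definition liftw (w : seq G) : seq (wr G H) := map (fun s => (fun _ => 1%g, s)) w.

Lemma foldl_lift f g w : foldl Wm (f, g) (liftw w) = (f, foldl mulG g w).
Proof. by elim: w g => [|s w IH] g //=; rewrite W_lift IH. Qed.

Lemma Forall_lift w : List.Forall symmG w -> List.Forall symmW (liftw w).
Proof. by apply: Forall_map; apply: Wgen_G. Qed.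

Definition lampe (c : H) : wr G H := (fun x => if `[< x = oneG >] then c else 1%g, oneG).

Lemma lampe_gen c : c <> 1%g -> symmW (lampe c).
Proof.
move=> hc; left; left; exists c; split => //; split => //; split.
  by rewrite /=; case: asboolP.
by move=> x hx /=; case: asboolP.
Qed.

Lemma W_lampe (f : G -> H) g c :
  Wm (f, g) (lampe c) = (fun q => if `[< q = g >] then (f q * c)%g else f q, mulG g oneG).
Proof.
rewrite /wr_mul /=; congr pair; apply: funext => q.
case: (pselect (q = g)) => h2.
  by rewrite h2 gVm; case: asboolP => // _; case: asboolP.
case: asboolP => h1; first by exfalso; apply: h2; rewrite -(gKVm g q) h1 gm1.
by case: asboolP => // _; rewrite mulg1.
Qed.

Definition upd (f : G -> H) (q0 : G) (v : H) := fun q => if `[< q = q0 >] then v else f q.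

Lemma single_update f g h w v :
  List.Forall symmG w -> foldl mulG oneG w = h ->
  exists w', (size w' <= (size w).*2.+1)%N /\ List.Forall symmW w' /\
    foldl Wm (f, g) w' = (upd f (mulG g h) v, g).
Proof.
move=> Hw Hh.
case: (eqVneq ((f (mulG g h))^-1 * v)%g 1%g) => hc.
  exists [::]; split => //; split => //=; congr pair; apply: funext => q.
  rewrite /upd; case: asboolP => // ->.
  by apply/eqP; rewrite eq_mulVg1 hc.
exists (liftw w ++ lampe ((f (mulG g h))^-1 * v)%g :: liftw (rev (map invG w))); split.
  by rewrite size_cat /= /liftw !size_map size_rev size_map addnS -addnn.
split.
  apply: Forall_cat; first by apply: Forall_lift.
  constructor; first by apply/lampe_gen/eqP.
  apply: Forall_lift; apply: Forall_rev; apply: Forall_map Hw; move=> s; exact: (symm_inv HG).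
rewrite foldl_cat foldl_lift /= W_lampe foldl_lift gm1 (foldl_g (foldl _ _ _)) foldl_revinv.
rewrite (foldl_g g) Hh -gA gmV gm1.
congr pair; apply: funext => q; rewrite /upd; case: asboolP => // ->.
by rewrite mulKVg.
Qed.

Lemma letter_prop s : symmW s ->
  (forall y, y <> oneG -> s.1 y = 1%g) /\ (s.2 = oneG \/ symmG s.2).
Proof.
case.
- case=> [[a [ha [h2 [h1 hy]]]] | [s0 [hs ->]]].
  + by split => //; left.
  + by split => //; right; left.
- rewrite /wr_inv; case=> [[a [ha [h2 [h1 hy]]]] | [s0 [hs E]]] /=.
  + have e2 := gV_eq1 h2; split; last by left.
    move=> y hy'; have := hy y hy'; rewrite /= e2 g1m => /eqP; rewrite invg_eq1.
    by move/eqP.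
  + have E1 := f_equal fst E; have E2 := f_equal snd E; simpl in E1, E2.
    split; last by right; right; rewrite E2.
    move=> y _; have := f_equal (fun F => F (mulG (invG s.2) y)) E1.
    by rewrite /= gKVm => /eqP; rewrite invg_eq1 => /eqP.
Qed.

Lemma step_change z s q : symmW s -> (Wm z s).1 q <> z.1 q -> q = z.2.
Proof.
move=> /letter_prop [h1 _]; rewrite /wr_mul /=.
case: (pselect (mulG (invG z.2) q = oneG)) => e.
  by rewrite -(gKVm z.2 q) e gm1.
by rewrite h1 // mulg1.
Qed.

Lemma proj_word w x : List.Forall symmW w -> exists w', (size w' <= size w)%N /\
  List.Forall symmG w' /\ foldl mulG x.2 w' = (foldl Wm x w).2.
Proof.
elim: w x => [|s w IH] x hf /=; first by exists [::].
inversion hf; subst.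
have [w' [h1 [h2 h3]]] := IH (Wm x s) H3.
case: (letter_prop H2) => _ [e|e].
- exists w'; split; first by apply: leq_trans h1 _.
  by split => //; rewrite -h3 /= e gm1.
- exists (s.2 :: w'); split => //; split; first by constructor.
  by rewrite -h3.
Qed.

Lemma proj_wd x y m : wdW x y m -> wd x.2 y.2 m.
Proof.
case=> w [hs [hf <-]]; have [w' [h1 [h2 h3]]] := proj_word x hf.
by exists w'; split; [apply: leq_trans hs|].
Qed.

Lemma wd_step a s : symmG s -> wd a (mulG a s) 1.
Proof. by move=> hs; exists [:: s]; split => //; split => //; constructor. Qed.

Lemma locality z w q : List.Forall symmW w -> (foldl Wm z w).1 q <> z.1 q ->
  exists m, (m < size w)%N /\ wd z.2 q m.
Proof.
elim: w z => [|s w IH] z //= hf hq; inversion hf; subst.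
case: (pselect ((Wm z s).1 q = z.1 q)) => e.
- rewrite -e in hq; have [m [hm hd]] := IH _ H3 hq.
  case: (letter_prop H2) => _ [e2|e2].
  + exists m; split; first by apply: leq_trans hm _.
    by rewrite /= e2 gm1 in hd.
  + exists (1 + m)%N; split; first by rewrite add1n ltnS.
    exact: (wd_trans (wd_step z.2 e2) hd).
- exists 0%N; split => //; rewrite (step_change H2 e).
  by exists [::].
Qed.

Lemma WiK s : Wi (Wi s) = s.
Proof.
case: s => f g; rewrite /wr_inv /=; congr pair; last by rewrite gVK.
by apply: funext => x; rewrite gKVm invgK.
Qed.

Lemma WmK p s : Wm (Wm p s) (Wi s) = p.
Proof.
case: p => f g; case: s => f' g'; rewrite /wr_mul /wr_inv /=; congr pair.
  apply: funext => x; rewrite gVM -gA gKVm.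
  by rewrite -mulgA mulgV mulg1.
by rewrite -gA gmV gm1.
Qed.

Lemma symmW_inv s : symmW s -> symmW (Wi s).
Proof. by case=> h; [right; rewrite WiK | left]. Qed.

Lemma foldl_WK w a : foldl Wm (foldl Wm a w) (rev (map Wi w)) = a.
Proof.
elim: w a => [|s w IH] a //=.
by rewrite rev_cons foldl_rcons IH WmK.
Qed.

Lemma wdW_sym a b m : wdW a b m -> wdW b a m.
Proof.
move=> [w [Hs [Hf Ha]]]; exists (rev (map Wi w)); split.
  by rewrite size_rev size_map.
split; first by apply: Forall_rev; apply: Forall_map Hf; apply: symmW_inv.
by rewrite -Ha foldl_WK.
Qed.

Lemma wdW_trans a b c m m' : wdW a b m -> wdW b c m' -> wdW a c (m + m').
Proof.
move=> [w [Hs [Hf Ha]]] [w' [Hs' [Hf' Hb]]]; exists (w ++ w'); split.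
  by rewrite size_cat leq_add.
by split; [apply: Forall_cat | rewrite foldl_cat Ha].
Qed.
End W.


Section C.
Variables (G : Type) (mulG : G -> G -> G) (oneG : G) (invG : G -> G).
Hypothesis HG : is_group mulG oneG invG.
Let gA := gA HG. Let g1m := g1m HG. Let gm1 := gm1 HG. Let gVm := gVm HG.
Let gmV := gmV HG. Let gKm := gKm HG. Let gKVm := gKVm HG. Let gVK := gVK HG.
Let gVM := gVM HG. Let gV1 := gV1 HG. Let gV_eq1 := gV_eq1 HG.
Let foldl_g := foldl_g HG. Let foldl_revinv := foldl_revinv HG.
Variable H : finGroupType.
Variable S : seq G.
Variable R : realType.
Notation A := (fun s => List.In s S).
Notation symmG := (symm invG A).
Notation wd := (wdist_le mulG invG A).
Notation Wm := (wr_mul mulG invG (H := H)).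
Notation Wi := (wr_inv mulG invG (H := H)).
Notation Wg := (wr_gens oneG (H := H) S).
Notation symmW := (symm Wi Wg).
Notation wdW := (wdist_le Wm Wi Wg).

Lemma fix_lamps (L : seq G) (B : R) (target : G -> H) f g :
  (forall h, List.In h L -> exists w, List.Forall symmG w /\ foldl mulG oneG w = h /\
      ((size w)%:R <= B)%R) ->
  exists w', List.Forall symmW w' /\ ((size w')%:R <= (size L)%:R * (2 * B + 1))%R /\
    foldl Wm (f, g) w' = (fun q => if `[< exists h, List.In h L /\ q = mulG g h >]
                                   then target q else f q, g).
Proof.
elim: L f => [|h L IH] f HL.
  exists [::]; split => //; split; first by rewrite /= mul0r.
  by congr pair; apply: funext => q; case: asboolP => // [[h' [[]]]].
have [w [hw [hh hs]]] := HL h (or_introl erefl).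
have [w1 [hs1 [hf1 he1]]] := single_update HG (S:=S) f g (target (mulG g h)) hw hh.
have [w2 [hf2 [hs2 he2]]] :=
  IH (upd f (mulG g h) (target (mulG g h))) (fun h' hh' => HL h' (or_intror hh')).
exists (w1 ++ w2); split; first by apply: Forall_cat.
split.
  rewrite size_cat natrD /=.
  have : ((size w1)%:R <= 2 * (size w)%:R + 1 :> R)%R.
    have := hs1; rewrite -(ler_nat R) -addn1 natrD -mul2n natrM => h1; lra.
  rewrite -addn1 natrD; lra.
rewrite foldl_cat he1 he2; congr pair; apply: funext => q; rewrite /upd.
case: asboolP => [[h' [hh' ->]]|hn].
  by case: asboolP => // [[]]; exists h'; split => //; right.
case: asboolP => [->|hq].
  by case: asboolP => // [[]]; exists h; split => //; left.
case: asboolP => // [[h' [[<-|hh'] e]]] //; exfalso; apply: hn; by exists h'.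
Qed.

Lemma growth_ext_ge0 (gamma : R -> nat) (x : \bar R) : (0 <= growth_ext gamma x)%E.
Proof. by case: x => //= r; rewrite lee_fin. Qed.

Notation dltG := (wdist_lt mulG invG A).
Notation dleG := (wdist_leE mulG invG A).
Notation dltW := (wdist_lt Wm Wi Wg).
Notation dleW := (wdist_leE Wm Wi Wg).

Lemma part1 (gamma : R -> nat) (Hgamma : is_growth_function mulG oneG invG S gamma)
  (n : nat) (D : R -> \bar R)
  (HD : control_function (fun _ : G => True) dltG dleG n D) (k : nat) (hk : (n <= k)%N) :
  exists DW : R -> \bar R,
    control_function (wr_elt (G := G) (H := H)) dltW dleW k DW /\
    weakly_dominates (fun t : R => (D t + t%:E) * growth_ext gamma (D t + t%:E))%E DW.
Proof.
set f := (fun t : R => (D t + t%:E) * growth_ext gamma (D t + t%:E))%E.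
exists (fun r => 4%:E * f (4 * r + 1)%R)%E.
case: HD => HD0 HD1.
split; last first.
  exists 4%R, 1%R; split; first by lra.
  split; first by lra.
  by move=> t ht; apply: leeDl; rewrite lee_fin.
split.
  move=> t ht; apply: mule_ge0; first by rewrite lee_fin.
  apply: mule_ge0; last by apply: growth_ext_ge0.
  by apply: adde_ge0; [apply: HD0; lra | rewrite lee_fin; lra].
move=> r hr.
set rho := (4 * r + 1)%R.
have hrho : (0 < rho)%R by rewrite /rho; lra.
have hrrho : (r < rho)%R by rewrite /rho; lra.
have [U [HU1 [HU2 [HU3 HU4]]]] := HD1 rho hrho.
have hk' : (n.+1 <= k.+1)%N by [].
have projlt : forall x y, dltW x y r -> dltG x.2 y.2 rho.
  move=> x y [m [hm hmr]]; exists m; split; first by apply: (proj_wd HG hm).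
  by apply: lt_trans hrrho.
exists (fun (i : 'I_k.+1) p => wr_elt p /\ (i < n.+1)%N /\ U (inord i) p.2).
split; first by move=> i x [].
split.
  move=> x hx; have [i0 hi0] := HU2 x.2 I; exists (widen_ord hk' i0).
  by split => //; split; [rewrite /= ltn_ord | rewrite /= inord_val].
split.
  move=> x hx; have [i0 hi0] := HU3 x.2 I; exists (widen_ord hk' i0).
  move=> y hy hxy; split => //; split; first by rewrite /= ltn_ord.
  by rewrite /= inord_val; apply: hi0 => //; apply: projlt.
move=> i x y [hx [hy hc]].
case: hx => [_ [hi Ux]].
set i0 : 'I_n.+1 := inord i.
set Rel := (fun a b : wr G H => (wr_elt a /\ (i < n.+1)%N /\ U i0 a.2) /\
  (wr_elt b /\ (i < n.+1)%N /\ U i0 b.2) /\ dltW a b r).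
have inv : forall z, clos_refl_trans_n1 _ Rel x z ->
  rcomp (U i0) dltG rho x.2 z.2 /\
  (forall q, z.1 q <> x.1 q -> exists b, rcomp (U i0) dltG rho x.2 b /\ dltG b q r).
  move=> z; elim => [|z1 z2 hstep hcl [IH1 IH2]].
    by split; [split; [|split] => //; apply: rt_refl | move=> q].
  case: hstep => [hz1 [hz2 hd]].
  have hdG := projlt _ _ hd.
  case: IH1 => [Ux' [Uz1 hcr]].
  split.
    split => //; split; first by case: hz2 => [_ []].
    apply: rt_trans hcr (rt_step _ _ _ _ _); split => //; split => //.
    by case: hz2 => [_ []].
  move=> q hq; case: (eqVneq (z1.1 q) (x.1 q)) => e; last by apply: IH2; apply/eqP.
  rewrite -e in hq.
  case: hd => m [[w [hsw [hfw hew]]] hmr].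
  rewrite -hew in hq.
  have [m' [hm' hwd]] := locality HG hfw hq.
  exists z1.2; split; first by split => //.
  exists m'; split => //; apply: le_lt_trans hmr; rewrite ler_nat.
  by apply: leq_trans hsw; apply: ltnW.
have [hxy hl] := inv y (clos_rt_rtn1 _ _ _ _ hc).
case E: (D rho) => [d| |]; last first.
- by have := HD0 rho (ltW hrho); rewrite E.
- left; rewrite /f -/rho E /=.
  by rewrite mulyy mulry gtr0_sg // mul1e.
right.
have hd0 : (0 <= d)%R by have := HD0 rho (ltW hrho); rewrite E lee_fin.
have := HU4 i0 x.2 y.2 hxy; rewrite E => -[//|[n0 [hn0 hn0d]]].
rewrite lee_fin in hn0d.
have [L [hnd [hsz hL]]] := Hgamma (d + rho)%R.
have HLw : forall h, List.In h L -> exists w, List.Forall symmG w /\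
    foldl mulG oneG w = h /\ ((size w)%:R <= d + rho)%R.
  move=> h /hL [m [[w [hs [hf he]]] hm]]; exists w; split => //; split => //.
  apply: ltW; apply: le_lt_trans hm; by rewrite ler_nat.
have [w1 [hf1 [hs1 he1]]] := fix_lamps y.1 x.1 x.2 HLw.
case: hn0 => [w0 [hs0 [hf0 he0]]].
have oneL : List.In oneG L.
  apply/hL; exists 0%N; split; first by exists [::].
  by rewrite /=; lra.
have hLsz : (1 <= size L)%N by case: (L) oneL.
exists (size (w1 ++ liftw H w0)); split.
  exists (w1 ++ liftw H w0); split => //; split.
    by apply: Forall_cat => //; apply: Forall_lift.
  rewrite foldl_cat (pairE x) he1.
  have -> : (fun q => if `[< exists h, List.In h L /\ q = mulG x.2 h >] then y.1 q else x.1 q) = y.1.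
    apply: funext => q; case: asboolP => // hn.
    case: (eqVneq (x.1 q) (y.1 q)) => // /eqP hne; exfalso; apply: hn.
    have [b [hb hbq]] := hl q (fun e => hne (esym e)).
    have := HU4 i0 x.2 b hb; rewrite E => -[//|[m1 [hm1 hm1d]]].
    rewrite lee_fin in hm1d.
    case: hbq => m2 [hm2 hm2r].
    have hw := wd_trans (wd_transl HG (invG x.2) hm1) (wd_transl HG (invG x.2) hm2).
    rewrite gVm in hw.
    exists (mulG (invG x.2) q); split; last by rewrite gKVm.
    apply/hL; exists (m1 + m2)%N; split => //.
    by rewrite natrD; lra.
  by rewrite foldl_lift he0 -pairE.
rewrite /f -/rho E /= -!EFinM lee_fin size_cat natrD.
rewrite /liftw size_map -hsz.
have h0 : ((size w0)%:R <= d)%R by apply: le_trans hn0d; rewrite ler_nat.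
have h1 : (1 <= (size L)%:R :> R)%R by rewrite ler1n.
have hB : (1 <= d + rho)%R by rewrite /rho; lra.
have h2 : ((size L)%:R <= (d + rho) * (size L)%:R :> R)%R.
  by rewrite ler_peMl //; lra.
have h3 : (d <= (d + rho) * (size L)%:R :> R)%R.
  apply: le_trans (_ : d + rho <= _)%R; first by lra.
  by rewrite ler_peMr //; lra.
nra.
Qed.
End C.


Lemma rcomp_sym (R : realType) (T : Type) (A : T -> Prop) (dlt : T -> T -> R -> Prop) r :
  (forall x y, dlt x y r -> dlt y x r) ->
  forall x y, rcomp A dlt r x y -> rcomp A dlt r y x.
Proof.
move=> hs x y [ha [hb hc]]; split => //; split => //.
elim: hc => [a b [h1 [h2 h3]]|a|a b c _ IH1 _ IH2].
- by apply: rt_step; split => //; split => //; apply: hs.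
- exact: rt_refl.
- exact: rt_trans IH2 IH1.
Qed.

Lemma rcomp_trans (R : realType) (T : Type) (A : T -> Prop) (dlt : T -> T -> R -> Prop) r x y z :
  rcomp A dlt r x y -> rcomp A dlt r y z -> rcomp A dlt r x z.
Proof.
move=> [ha [_ h1]] [_ [hc h2]]; split => //; split => //; exact: rt_trans h1 h2.
Qed.

Lemma sum_card (T : finType) (P : pred T) : (\sum_j (P j : nat) = #|[set j | P j]|)%N.
Proof.
rewrite -sum1_card [RHS]big_mkcond /=; apply: eq_bigr => j _; rewrite inE; by case: (P j).
Qed.

Section D.
Variables (G : Type) (mulG : G -> G -> G) (oneG : G) (invG : G -> G).
Hypothesis HG : is_group mulG oneG invG.
Let gA := gA HG. Let g1m := g1m HG. Let gm1 := gm1 HG. Let gVm := gVm HG.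
Let gmV := gmV HG. Let gKm := gKm HG. Let gKVm := gKVm HG. Let gVK := gVK HG.
Variable H : finGroupType.
Variable S : seq G.
Variable R : realType.
Notation A := (fun s => List.In s S).
Notation symmG := (symm invG A).
Notation wd := (wdist_le mulG invG A).
Notation Wm := (wr_mul mulG invG (H := H)).
Notation Wi := (wr_inv mulG invG (H := H)).
Notation Wg := (wr_gens oneG (H := H) S).
Notation symmW := (symm Wi Wg).
Notation wdW := (wdist_le Wm Wi Wg).
Notation dltW := (wdist_lt Wm Wi Wg).
Notation dleW := (wdist_leE Wm Wi Wg).

Variable l : seq G.
Hypothesis hnd : List.NoDup l.
Notation N := (size l).
Definition pos (j : 'I_N) := nth oneG l j.

Lemma pos_inj : injective pos.
Proof. move=> i j e; apply: val_inj; exact: (NoDup_nth_inj hnd (ltn_ord i) (ltn_ord j) e). Qed.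

Lemma hamming z w : List.Forall symmW w ->
  (#|[set j : 'I_N | (foldl Wm z w).1 (pos j) != z.1 (pos j)]| <= size w)%N.
Proof.
elim: w z => [|s w IH] z hf /=.
  by rewrite (_ : [set j | _] = finset.set0) ?cards0 //; apply/setP => j; rewrite !inE eqxx.
move: hf => /List.Forall_cons_iff [hs hw].
apply: leq_trans (_ : #|[set j : 'I_N | (foldl Wm (Wm z s) w).1 (pos j) != (Wm z s).1 (pos j)]
   :|: [set j : 'I_N | (Wm z s).1 (pos j) != z.1 (pos j)]| <= _)%N.
  apply: subset_leq_card; apply/fintype.subsetP => j; rewrite !inE.
  move=> h; apply/negPn/negP => /norP [/negPn/eqP e1 /negPn/eqP e2]; by rewrite e1 e2 eqxx in h.
apply: leq_trans (leq_card_setU _ _) _.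
rewrite -addn1 leq_add //; first by apply: IH.
apply/card_le1P => j1 hj1 j2; rewrite !inE in hj1 *.
apply/idP/idP => [hj2|/eqP -> //].
apply/eqP; apply: pos_inj.
move/eqP: hj1 => /(step_change HG hs) ->.
by move/eqP: hj2 => /(step_change HG hs) ->.
Qed.

Lemma core (k : nat) (DW : R -> \bar R)
  (HDW : control_function (wr_elt (G := G) (H := H)) dltW dleW k DW)
  (t : R) (ht : (0 <= t)%R)
  (hl : forall g, List.In g l -> wdist_lt mulG invG A oneG g t)
  (a : H) (ha : a != 1%g) (d : R)
  (E : DW ((k.+2)%:R * t + 1)%R = d%:E) :
  ((N%:R : R) <= (k.+2)%:R * d)%R.
Proof.
set r := ((k.+2)%:R * t + 1)%R.
have hr : (0 < r)%R by rewrite /r; apply: ltr_wpDl => //; apply: mulr_ge0.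
case: HDW => HW0 HW1.
have [Xs [HX1 [HX2 [HX3 HX4]]]] := HW1 r hr.
have hd0 : (0 <= d)%R by have := HW0 r (ltW hr); rewrite E lee_fin.
pose cube := {ffun 'I_N -> bool}.
pose phi (b : cube) : wr G H :=
  (fun q => if `[< exists j : 'I_N, b j /\ q = pos j >] then a else 1%g, oneG).
have phi_pos : forall b j, (phi b).1 (pos j) = if b j then a else 1%g.
  move=> b j /=; case: asboolP => [[j' [hb e]]|hn].
    by rewrite (pos_inj e) hb.
  case hbj: (b j) => //; exfalso; apply: hn; by exists j.
have phi_elt : forall b, wr_elt (phi b).
  move=> b; exists l => q /=; case: asboolP => [[j [_ ->]] _ | _ h].
    by apply: In_nth; exact: ltn_ord.
  by exfalso; apply: h.
pose flip (b : cube) (j : 'I_N) : cube := [ffun j' => if j' == j then ~~ b j' else b j'].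
have flip_inj : forall j, injective (flip ^~ j).
  move=> j; apply: (can_inj (g := flip ^~ j)) => b.
  by apply/ffunP => j'; rewrite !ffunE; case: eqP => // ->; rewrite negbK.
have neighbor : forall b j, dltW (phi b) (phi (flip b j)) r.
  move=> b j.
  have : List.In (pos j) l by apply: In_nth; exact: ltn_ord.
  move/hl => [m [[w [hs [hf he]]] hm]].
  have [w' [hs' [hf' he']]] :=
    single_update HG (S := S) (phi b).1 oneG ((phi (flip b j)).1 (pos j)) hf he.
  exists (size w'); split.
    exists w'; split => //; split => //.
    rewrite (_ : phi b = ((phi b).1, oneG)) // he' g1m.
    rewrite [RHS](_ : phi (flip b j) = ((phi (flip b j)).1, oneG)) //.
    congr pair; apply: funext => q; rewrite /upd; case: asboolP => [->|hq] //.
    rewrite /phi /=.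
    case: asboolP => [[j1 [h1 e1]]|n1]; case: asboolP => [[j2 [h2 e2]]|n2] //.
    - exfalso; apply: n2; exists j1; split => //; rewrite ffunE.
      case: eqP => [e|_] //; by subst; exfalso; apply: hq.
    - exfalso; apply: n1; exists j2; rewrite ffunE in h2.
      by case: eqP h2 => [e|_] h2; [subst; exfalso; apply: hq | split].
  have h1 : ((size w')%:R <= 2 * (m%:R) + 1 :> R)%R.
    have : (size w' <= m.*2.+1)%N.
      by apply: leq_trans hs' _; rewrite ltnS leq_double.
    by rewrite -(ler_nat R) -addn1 natrD -mul2n natrM.
  have h2 : (2 * t <= (k.+2)%:R * t)%R.
    by apply: ler_wpM2r => //; rewrite (ler_nat R 2 k.+2).
  rewrite /r; lra.
have hdist : forall b y m, wdW (phi b) (phi y) m -> (#|[set j | b j != y j]| <= m)%N.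
  move=> b y m [w [hs [hf he]]].
  apply: leq_trans (leq_trans (hamming (phi b) hf) hs).
  apply: subset_leq_card; apply/fintype.subsetP => j; rewrite !inE he !phi_pos.
  by case: (b j); case: (y j) => //= _; rewrite ?ha // eq_sym.
have refl_dlt : forall x, dltW x x r.
  by move=> x; exists 0%N; split => //; exists [::].
have dsym : forall x y, dltW x y r -> dltW y x r.
  by move=> x y [m [hm hmr]]; exists m; split => //; apply: (wdW_sym HG).
have hc : forall b : cube, exists i, forall y, wr_elt y -> dltW (phi b) y r -> Xs i y.
  by move=> b; apply: HX3; apply: phi_elt.
case: (choice hc) => c hcP.
pose Eq i b y := rcomp (Xs i) dltW r (phi b) (phi y).
pose rep i b := odflt b [pick y | `[< Eq i b y >] ].
have rep_E : forall i b, Xs i (phi b) -> Eq i b (rep i b).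
  move=> i b hb; rewrite /rep; case: pickP => [y /asboolP //|h].
  by exfalso; have := h b; rewrite asboolT //; split => //; split => //; apply: rt_refl.
have rep_eq : forall i b y, Eq i b y -> rep i b = rep i y.
  move=> i b y hby; rewrite /rep (@eq_pick _ _ (fun z => `[< Eq i y z >])).
    case: pickP => //= h; exfalso; have := h b.
    by rewrite asboolT //; apply: rcomp_sym hby.
  move=> z; apply/asboolP/asboolP => h.
    by apply: rcomp_trans h; apply: rcomp_sym hby.
  exact: rcomp_trans hby h.
pose lv (i : 'I_k.+1) (b : cube) (j : 'I_N) := b j != rep i b j.
have hlv : forall i b, Xs i (phi b) -> ((#|[set j | lv i b j]|)%:R <= d)%R.
  move=> i b hb; have := HX4 i _ _ (rep_E i b hb); rewrite E => -[//|[m [hm hmd]]].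
  rewrite lee_fin in hmd; apply: le_trans hmd; rewrite ler_nat; exact: hdist hm.
have h0 : forall b, Xs (c b) (phi b) by move=> b; apply: hcP => //; apply: phi_elt.
have hkey : forall b j, ~~ lv (c b) b j ->
    `[< Xs (c b) (phi (flip b j)) >] && lv (c b) (flip b j) j.
  move=> b j hn.
  have h1 : Xs (c b) (phi (flip b j)) by apply: hcP; [apply: phi_elt | apply: neighbor].
  have hE : Eq (c b) b (flip b j).
    by split => //; split => //; apply: rt_step; split => //; split => //; apply: neighbor.
  rewrite (asboolT h1) /= /lv -(rep_eq _ _ _ hE) ffunE eqxx.
  by move: hn; rewrite /lv negbK => /eqP <-; case: (b j).
pose K := (\sum_(b : cube) 1)%N.
have hK : (0 < K)%N by rewrite /K (bigD1 [ffun=> false]).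
have sumK : forall x : R, (\sum_(b : cube) x = K%:R * x)%R.
  by move=> x; rewrite /K natr_sum mulr_suml; apply: eq_bigr => b _; rewrite mul1r.
set S1 := (\sum_(b : cube) \sum_(j < N) (~~ lv (c b) b j : nat))%N.
set S2 := (\sum_(b : cube) \sum_(j < N) (lv (c b) b j : nat))%N.
set S3 := (\sum_(b : cube) \sum_(j < N) \sum_(i < k.+1)
              ((`[< Xs i (phi b) >] && lv i b j) : nat))%N.
have tot : (S1 + S2 = K * N)%N.
  rewrite /S1 /S2 -big_split /=.
  rewrite (eq_bigr (fun _ => N)) /K; first by rewrite big_distrl /=; apply: eq_bigr => b _; rewrite mul1n.
  move=> b _; rewrite -big_split /=.
  by rewrite (eq_bigr (fun _ => 1%N)) ?sum_nat_const ?card_ord ?muln1 // => j _; rewrite addn_negb.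
have hS1 : (S1 <= S3)%N.
  apply: leq_trans (_ : \sum_(b : cube) \sum_(j < N) \sum_(i < k.+1)
     ((`[< Xs i (phi (flip b j)) >] && lv i (flip b j) j) : nat) <= _)%N.
    apply: leq_sum => b _; apply: leq_sum => j _.
    case hn: (~~ lv (c b) b j) => //.
    by rewrite (bigD1 (c b)) //= (hkey b j hn) leq_addr.
  rewrite exchange_big /= /S3 [X in (_ <= X)%N]exchange_big /=.
  apply: eq_leq; apply: eq_bigr => j _.
  by rewrite [RHS](reindex_inj (flip_inj j)).
have hS3 : ((S3%:R : R) <= K%:R * ((k.+1)%:R * d))%R.
  rewrite /S3 (eq_bigr (fun b => \sum_(i < k.+1) \sum_(j < N)
     ((`[< Xs i (phi b) >] && lv i b j) : nat)))%N; last by move=> b _; rewrite exchange_big.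
  rewrite natr_sum.
  apply: le_trans (_ : \sum_(b : cube) \sum_(i < k.+1) d <= _)%R.
    apply: ler_sum => b _; rewrite natr_sum; apply: ler_sum => i _.
    case: asboolP => hb /=; last by rewrite big1 // => j _.
    by rewrite sum_card; apply: hlv.
  by rewrite sumK; apply: ler_wpM2l => //; rewrite sumr_const card_ord mulr_natl.
have hS2 : ((S2%:R : R) <= K%:R * d)%R.
  rewrite /S2 natr_sum.
  apply: le_trans (_ : \sum_(b : cube) d <= _)%R; last by rewrite sumK.
  by apply: ler_sum => b _; rewrite sum_card; apply: hlv.
have : ((K%:R : R) * N%:R <= K%:R * ((k.+2)%:R * d))%R.
  rewrite -natrM -tot natrD.
  have -> : ((k.+2)%:R = (k.+1)%:R + 1 :> R)%R by rewrite -addn1 natrD.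
  have : ((S1%:R : R) <= S3%:R)%R by rewrite ler_nat.
  lra.
by rewrite ler_pM2l // ltr0n.
Qed.
End D.

Local Open Scope ring_scope.
Local Open Scope ereal_scope.


Theorem theorem4p5 (R : realType)
  (G : Type) (mulG : G -> G -> G) (oneG : G) (invG : G -> G)
  (HG : is_group mulG oneG invG)
  (S : seq G) (HS : generates mulG oneG invG S)
  (Ginf : ~ (exists l : seq G, forall g : G, List.In g l))
  (H : finGroupType) (Hnt : (1 < #|[set: H]|)%N)
  (gamma : R -> nat) (Hgamma : is_growth_function mulG oneG invG S gamma)
  (n : nat) (D : R -> \bar R)
  (HD : control_function (fun _ : G => True)
          (wdist_lt mulG invG (fun s => List.In s S))
          (wdist_leE mulG invG (fun s => List.In s S)) n D) :
  (forall k : nat, (n <= k)%N ->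
     exists DW : R -> \bar R,
       control_function (wr_elt (G := G) (H := H))
         (wdist_lt (wr_mul mulG invG (H := H)) (wr_inv mulG invG (H := H)) (wr_gens oneG (H := H) S))
         (wdist_leE (wr_mul mulG invG (H := H)) (wr_inv mulG invG (H := H)) (wr_gens oneG (H := H) S))
         k DW /\
       weakly_dominates
         (fun t : R => (D t + t%:E) * growth_ext gamma (D t + t%:E)) DW) /\
  (forall k : nat, (n <= k)%N ->
     forall DW : R -> \bar R,
       control_function (wr_elt (G := G) (H := H))
         (wdist_lt (wr_mul mulG invG (H := H)) (wr_inv mulG invG (H := H)) (wr_gens oneG (H := H) S))
         (wdist_leE (wr_mul mulG invG (H := H)) (wr_inv mulG invG (H := H)) (wr_gens oneG (H := H) S))
         k DW ->
       weakly_dominates DW (fun t : R => ((gamma t)%:R)%:E)).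
Proof.
split.
  by move=> k hk; exact: (part1 HG H Hgamma HD hk).
move=> k hk DW HDW.
have [a ha] : exists a : H, a != 1%g.
  have [x [y [_ _ hxy]]] := card_gt1P Hnt.
  case: (eqVneq x 1%g) => [ex|hx]; last by exists x.
  by exists y; rewrite -ex eq_sym.
exists (k.+2)%:R, 1%R; split; first by rewrite ler1n.
split => // t ht.
have [l [hnd [hsz hl]]] := Hgamma t.
case E: (DW ((k.+2)%:R * t + 1)%R) => [d| |].
- have := @core _ _ _ _ HG H S R l hnd k DW HDW t ht (fun g hg => proj1 (hl g) hg) a ha d E.
  rewrite hsz => h; rewrite -EFinM -EFinD lee_fin; lra.
- rewrite mulry gtr0_sg ?ltr0n // mul1e /=; exact: leey.
- have h0 : (0 <= (k.+2)%:R * t + 1 :> R)%R by apply: addr_ge0 => //; apply: mulr_ge0.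
  by have := proj1 HDW _ h0; rewrite E.
Qed.
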